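(* Let $g:\mathbb{Z}_{\ge 0}\to\mathbb{R}$ be a linearly progressing opponent process (LPOP) with switching time $\tau_0\ge1$ (so $g(0)>0$). Let $T\ge1$, $y_{\min}\in\mathbb{R}$, and let $(y^{\mathrm{nat,lb}}_t)_{t=1}^{T}$ be a given real sequence. Define doses recursively for $t=0,\dots,T-1$ by $$u_t=\max\left\{0,\ \frac{y_{\min}-y^{\mathrm{nat,lb}}_{t+1}-\sum_{k=1}^{t} g(k)\,u_{t-k}}{g(0)}\right\}.$$ Call a natural progression $(y^{\mathrm{nat}}_t)_{t\ge0}$ admissible if $y^{\mathrm{nat}}_t\ge y^{\mathrm{nat,lb}}_t$ for all $t=1,\dots,T$. Then: (a) for every admissible natural progression, the well-being sequence defined by $y_0=y^{\mathrm{nat}}_0$ and $y_{t+1}=\sum_{k=0}^{t}g(k)u_{t-k}+y^{\mathrm{nat}}_{t+1}$ satisfies $y_t\ge y_{\min}$ for all $t=1,\dots,T$; and (b) $(u_t)$ has minimal cumulative dose $\sum_{t=0}^{T-1}u_t$ among all nonnegative dosing sequences $(u'_0,\dots,u'_{T-1})$ that guarantee $y'_t\ge y_{\min}$ for all $t=1,\dots,T$ under every admissible natural progression.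
   Context: An impulse response $g:\mathbb{Z}_{\ge0}\to\mathbb{R}$ is an opponent process if there is a time $\tau_0$ with $g(\tau)>0$ for $\tau<\tau_0$ and $g(\tau)\le 0$ for $\tau\ge\tau_0$. It is a linearly progressing opponent process (LPOP) if in addition there is $\alpha\in[0,1)$ with $g(t+1)\le\alpha\,g(t)$ for all $t<\tau_0-1$ and $|g(t+1)|\ge\alpha\,|g(t)|$ for all $t\ge\tau_0$. Doses are nonnegative reals; the well-being of a dosing sequence $u'$ under natural progression $y^{\mathrm{nat}}$ is $y'_0=y^{\mathrm{nat}}_0$, $y'_{t+1}=\sum_{k=0}^{t}g(k)u'_{t-k}+y^{\mathrm{nat}}_{t+1}$. *)

(* Defs.v *)
From Stdlib Require Export Reals.
Open Scope R_scope.

Fixpoint sumR (f : nat -> R) (n : nat) : R :=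
  match n with
  | O => 0
  | S m => sumR f m + f m
  end.

Definition opponent_process (g : nat -> R) (tau0 : nat) : Prop :=
  (forall t, (t < tau0)%nat -> 0 < g t) /\
  (forall t, (tau0 <= t)%nat -> g t <= 0).

Definition LPOP (g : nat -> R) (tau0 : nat) : Prop :=
  opponent_process g tau0 /\
  exists alpha : R, 0 <= alpha < 1 /\
    (forall t, (t + 1 < tau0)%nat -> g (S t) <= alpha * g t) /\
    (forall t, (tau0 <= t)%nat -> Rabs (g (S t)) >= alpha * Rabs (g t)).

Definition wellbeing (g u ynat : nat -> R) (t : nat) : R :=
  match t with
  | O => ynat O
  | S s => sumR (fun k => g k * u (s - k)%nat) (S s) + ynat (S s)
  end.

Definition admissible (T : nat) (ylb ynat : nat -> R) : Prop :=
  forall t, (1 <= t <= T)%nat -> ynat t >= ylb t.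

Definition guarantees (g : nat -> R) (T : nat) (ymin : R) (ylb u : nat -> R) : Prop :=
  forall ynat, admissible T ylb ynat ->
    forall t, (1 <= t <= T)%nat -> wellbeing g u ynat t >= ymin.

(* Main.v *)
Require Import Defs.
From Stdlib Require Import Reals Lra Lia Psatz Arith.
Open Scope R_scope.

Lemma sumR_ext (f h : nat -> R) n :
  (forall k, (k < n)%nat -> f k = h k) -> sumR f n = sumR h n.
Proof.
  induction n as [|n IH]; intros H; simpl; [reflexivity|].
  rewrite IH by (intros; apply H; lia). rewrite H by lia. reflexivity.
Qed.

Lemma sumR_le (f h : nat -> R) n :
  (forall k, (k < n)%nat -> f k <= h k) -> sumR f n <= sumR h n.
Proof.
  induction n as [|n IH]; intros H; simpl; [lra|].
  assert (sumR f n <= sumR h n) by (apply IH; intros; apply H; lia).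
  assert (f n <= h n) by (apply H; lia). lra.
Qed.

Lemma sumR_plus (f h : nat -> R) n :
  sumR (fun k => f k + h k) n = sumR f n + sumR h n.
Proof. induction n; simpl; [lra|]. rewrite IHn. lra. Qed.

Lemma sumR_scal (c : R) (f : nat -> R) n :
  sumR (fun k => c * f k) n = c * sumR f n.
Proof. induction n; simpl; [lra|]. rewrite IHn. lra. Qed.

Lemma sumR_zero n : sumR (fun _ => 0) n = 0.
Proof. induction n; simpl; [lra|]. rewrite IHn. lra. Qed.

Lemma sumR_shift (f : nat -> R) n :
  sumR f (S n) = f O + sumR (fun j => f (S j)) n.
Proof. induction n; simpl in *; [lra|]. rewrite IHn. lra. Qed.

Lemma sumR_rev (h : nat -> R) n :
  sumR h n = sumR (fun k => h (n - S k)%nat) n.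
Proof.
  induction n as [|n IH]; [reflexivity|].
  change (sumR h n + h n = sumR (fun k => h (S n - S k)%nat) (S n)).
  rewrite sumR_shift. rewrite IH.
  replace (S n - 1)%nat with n by lia.
  simpl. lra.
Qed.

Lemma sumR_swap (f : nat -> nat -> R) n m :
  sumR (fun i => sumR (fun j => f i j) m) n = sumR (fun j => sumR (fun i => f i j) n) m.
Proof.
  induction n as [|n IH]; simpl.
  - rewrite sumR_zero. reflexivity.
  - rewrite IH. rewrite <- sumR_plus. reflexivity.
Qed.

Lemma sumR_delta (c : R) s n : (s < n)%nat ->
  sumR (fun t => if Nat.eqb t s then c else 0) n = c.
Proof.
  induction n as [|n IH]; intros H; [lia|]. simpl.
  destruct (Nat.eqb_spec n s).
  - subst. rewrite (sumR_ext _ (fun _ => 0)). rewrite sumR_zero. lra.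
    intros k Hk. destruct (Nat.eqb_spec k s); [lia|reflexivity].
  - rewrite IH by lia. lra.
Qed.

Lemma sumR_trunc (h : nat -> R) t d :
  sumR (fun s => if Nat.leb s t then h s else 0) (S t + d) = sumR h (S t).
Proof.
  induction d as [|d IH].
  - rewrite Nat.add_0_r. apply sumR_ext. intros k Hk.
    destruct (Nat.leb_spec k t); [reflexivity|lia].
  - rewrite Nat.add_succ_r.
    change (sumR (fun s => if Nat.leb s t then h s else 0) (S t + d) +
      (if Nat.leb (S t + d) t then h (S t + d)%nat else 0) = sumR h (S t)).
    rewrite IH.
    destruct (Nat.leb_spec (S t + d) t); [lia|]. lra.
Qed.

Definition Cv (g x : nat -> R) (t : nat) : R :=
  sumR (fun k => g k * x (t - k)%nat) (S t).

Definition Dv (g : nat -> R) (T : nat) (s : nat) (y : nat -> R) : R :=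
  sumR (fun t => if Nat.leb s t then g (t - s)%nat * y t else 0) T.

Lemma exchange (g x y : nat -> R) T :
  sumR (fun s => x s * Dv g T s y) T = sumR (fun t => y t * Cv g x t) T.
Proof.
  unfold Dv.
  rewrite (sumR_ext (fun s => x s * _) (fun s => sumR (fun t =>
     x s * (if Nat.leb s t then g (t - s)%nat * y t else 0)) T))
    by (intros; rewrite sumR_scal; reflexivity).
  rewrite sumR_swap. apply sumR_ext. intros t Ht.
  rewrite (sumR_ext _ (fun s => y t * (if Nat.leb s t then g (t - s)%nat * x s else 0))).
  2:{ intros k _. destruct (Nat.leb k t); ring. }
  rewrite sumR_scal. f_equal.
  replace T with (S t + (T - S t))%nat by lia. rewrite sumR_trunc.
  unfold Cv. rewrite (sumR_rev (fun s => g (t - s)%nat * x s)).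
  apply sumR_ext. intros k Hk.
  replace (t - (S t - S k))%nat with k by lia.
  replace (S t - S k)%nat with (t - k)%nat by lia. ring.
Qed.

Section Dual.
Variables (g u : nat -> R) (T : nat) (alpha : R).
Hypothesis Ha : 0 <= alpha < 1.
Hypothesis Hg0 : 0 < g O.
Hypothesis HgS : forall k, g (S k) <= alpha * g k.

Lemma dual_exists : forall m, (m <= T)%nat -> exists y : nat -> R,
  (forall t, 0 <= y t) /\ (forall t, (t < T - m)%nat -> y t = 0) /\
  (forall s, (T - m <= s)%nat -> Dv g T s y <= 1) /\
  (forall s, (T - m <= s < T)%nat -> 0 < u s -> Dv g T s y = 1) /\
  (forall s, (T - m <= s < T)%nat -> u s <= 0 -> y s = 0).
Proof.
  induction m as [|m IH]; intros Hm.
  - exists (fun _ => 0). rewrite Nat.sub_0_r.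
    assert (HD : forall s, Dv g T s (fun _ => 0) = 0).
    { intros s. unfold Dv. rewrite (sumR_ext _ (fun _ => 0)). apply sumR_zero.
      intros k _. destruct (Nat.leb s k); ring. }
    repeat split; intros; try lra; try lia.
    rewrite HD; lra.
  - destruct (IH ltac:(lia)) as [y [Hy0 [Hyz [HD [HD1 Hcs]]]]].
    set (s := (T - S m)%nat).
    set (Q := sumR (fun t => if Nat.leb (S s) t then g (t - s)%nat * y t else 0) T).
    assert (HQ : Q <= alpha * Dv g T (S s) y).
    { unfold Q, Dv. rewrite <- sumR_scal. apply sumR_le. intros t _.
      destruct (Nat.leb_spec (S s) t); [|lra].
      replace (t - s)%nat with (S (t - S s)) by lia.
      specialize (HgS (t - S s)%nat). specialize (Hy0 t).
      assert (g (S (t - S s)) * y t <= (alpha * g (t - S s)%nat) * y t)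
        by (apply Rmult_le_compat_r; auto). lra. }
    assert (HDs : Dv g T (S s) y <= 1) by (apply HD; unfold s; lia).
    assert (HQ1 : Q <= 1) by nra.
    set (v := if Rlt_dec 0 (u s) then (1 - Q) / g O else 0).
    assert (Hv : 0 <= v).
    { unfold v. destruct (Rlt_dec 0 (u s)); [|lra].
      apply Rmult_le_pos; [lra|]. left. apply Rinv_0_lt_compat. lra. }
    assert (Hys : y s = 0) by (apply Hyz; unfold s; lia).
    set (y' := fun t => if Nat.eqb t s then v else y t).
    assert (HDs' : Dv g T s y' = g O * v + Q).
    { unfold Dv, Q.
      rewrite (sumR_ext _ (fun t => (if Nat.eqb t s then g O * v else 0) +
                (if Nat.leb (S s) t then g (t - s)%nat * y t else 0))).
      - rewrite sumR_plus. rewrite sumR_delta by (unfold s; lia). reflexivity.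
      - intros t _. unfold y'. destruct (Nat.eqb_spec t s).
        + subst t. rewrite Nat.sub_diag.
          destruct (Nat.leb_spec s s); [|lia]. destruct (Nat.leb_spec (S s) s); [lia|]. ring.
        + destruct (Nat.leb_spec s t); destruct (Nat.leb_spec (S s) t); try lia; ring. }
    assert (HDo : forall s', (s < s')%nat -> Dv g T s' y' = Dv g T s' y).
    { intros s' Hs'. unfold Dv. apply sumR_ext. intros t _. unfold y'.
      destruct (Nat.eqb_spec t s); [|reflexivity].
      subst t. destruct (Nat.leb_spec s' s); [lia|reflexivity]. }
    exists y'. split; [|split; [|split; [|split]]].
    + intros t. unfold y'. destruct (Nat.eqb t s); auto.
    + intros t Ht. unfold y'. destruct (Nat.eqb_spec t s); [lia|]. apply Hyz. lia.
    + intros s' Hs'. destruct (Nat.eq_dec s' s).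
      * subst s'. rewrite HDs'. unfold v. destruct (Rlt_dec 0 (u s)).
        -- field_simplify; lra.
        -- lra.
      * rewrite HDo by (unfold s in *; lia). apply HD. unfold s in *; lia.
    + intros s' Hs' Hu. destruct (Nat.eq_dec s' s).
      * subst s'. rewrite HDs'. unfold v. destruct (Rlt_dec 0 (u s)); [|lra].
        field. lra.
      * rewrite HDo by (unfold s in *; lia). apply HD1; [unfold s in *; lia|auto].
    + intros s' Hs' Hu. unfold y'. destruct (Nat.eqb_spec s' s).
      * subst s'. unfold v. destruct (Rlt_dec 0 (u s)); [lra|reflexivity].
      * apply Hcs; [unfold s in *; lia|auto].
Qed.
End Dual.

Lemma gS_lemma (g : nat -> R) tau0 alpha :
  opponent_process g tau0 -> 0 <= alpha ->
  (forall t, (t + 1 < tau0)%nat -> g (S t) <= alpha * g t) ->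
  (forall t, (tau0 <= t)%nat -> Rabs (g (S t)) >= alpha * Rabs (g t)) ->
  forall k, g (S k) <= alpha * g k.
Proof.
  intros [Hp Hn] Ha H1 H2 k.
  destruct (lt_dec (k + 1) tau0) as [Hk|Hk]; [auto|].
  destruct (Nat.eq_dec (k + 1) tau0) as [He|He].
  - assert (g (S k) <= 0) by (apply Hn; lia).
    assert (0 < g k) by (apply Hp; lia). nra.
  - assert (A : g (S k) <= 0) by (apply Hn; lia).
    assert (B : g k <= 0) by (apply Hn; lia).
    specialize (H2 k ltac:(lia)).
    rewrite (Rabs_left1 _ A), (Rabs_left1 _ B) in H2. lra.
Qed.

Theorem proposition1 (g : nat -> R) (tau0 : nat) (T : nat) (ymin : R)
  (ylb u : nat -> R) :
  LPOP g tau0 -> (1 <= tau0)%nat -> (1 <= T)%nat ->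
  (* u is the recursively defined dose, for t = 0 .. T-1 *)
  (forall t, (t < T)%nat ->
     u t = Rmax 0 ((ymin - ylb (S t)
                    - sumR (fun j => g (S j) * u (t - S j)%nat) t) / g O)) ->
  (* (a) *)
  guarantees g T ymin ylb u /\
  (* (b) *)
  (forall u' : nat -> R,
     (forall t, (t < T)%nat -> 0 <= u' t) ->
     guarantees g T ymin ylb u' ->
     sumR u T <= sumR u' T).
Proof.
  intros [Hop [alpha [Ha [H1 H2]]]] Htau HT Hu.
  assert (Hg0 : 0 < g O) by (apply (proj1 Hop); lia).
  assert (HgS := gS_lemma g tau0 alpha Hop (proj1 Ha) H1 H2).
  assert (HC : forall x t, Cv g x t =
            g O * x t + sumR (fun j => g (S j) * x (t - S j)%nat) t).
  { intros x t. unfold Cv. rewrite sumR_shift. rewrite Nat.sub_0_r. reflexivity. }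
  assert (Hlow : forall t, (t < T)%nat -> Cv g u t >= ymin - ylb (S t)).
  { intros t Ht. rewrite HC. rewrite (Hu t Ht).
    set (X := (ymin - ylb (S t) - sumR (fun j => g (S j) * u (t - S j)%nat) t)).
    assert (X / g O <= Rmax 0 (X / g O)) by apply Rmax_r.
    assert (g O * (X / g O) = X) by (field; lra).
    assert (g O * (X / g O) <= g O * Rmax 0 (X / g O)) by (apply Rmult_le_compat_l; lra).
    unfold X in *. lra. }
  assert (Hpos : forall t, (t < T)%nat -> 0 <= u t).
  { intros t Ht. rewrite (Hu t Ht). apply Rmax_l. }
  assert (Htight : forall t, (t < T)%nat -> 0 < u t -> Cv g u t = ymin - ylb (S t)).
  { intros t Ht Hut. rewrite HC. rewrite (Hu t Ht) in Hut |- *.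
    set (X := (ymin - ylb (S t) - sumR (fun j => g (S j) * u (t - S j)%nat) t)) in *.
    unfold Rmax in *. destruct (Rle_dec 0 (X / g O)); [|lra].
    unfold X. field. lra. }
  split.
  - intros ynat Hadm t Ht. destruct t as [|s]; [lia|].
    assert (Hs : (s < T)%nat) by lia.
    specialize (Hlow s Hs). specialize (Hadm (S s) Ht).
    unfold wellbeing. fold (Cv g u s). lra.
  - intros u' Hu'0 Hg'.
    assert (Hfeas : forall t, (t < T)%nat -> Cv g u' t >= ymin - ylb (S t)).
    { intros t Ht. assert (Had : admissible T ylb ylb) by (intros k _; lra).
      specialize (Hg' ylb Had (S t) ltac:(lia)). unfold wellbeing in Hg'.
      fold (Cv g u' t) in Hg'. lra. }
    destruct (dual_exists g u T alpha Ha Hg0 HgS T (le_n T))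
      as [y [Hy0 [_ [HD [HD1 Hcs]]]]].
    rewrite Nat.sub_diag in *.
    apply Rle_trans with (sumR (fun s => u' s * Dv g T s y) T).
    + rewrite exchange.
      apply Rle_trans with (sumR (fun t => y t * (ymin - ylb (S t))) T).
      * apply Req_le.
        transitivity (sumR (fun s => u s * Dv g T s y) T).
        -- apply sumR_ext. intros t Ht.
           destruct (Rlt_dec 0 (u t)) as [Hp|Hp].
           ++ rewrite HD1 by (auto; lia). ring.
           ++ assert (u t = 0) by (specialize (Hpos t Ht); lra).
              rewrite H. ring.
        -- rewrite exchange. apply sumR_ext. intros t Ht.
           destruct (Rlt_dec 0 (u t)) as [Hp|Hp].
           ++ rewrite Htight by auto. reflexivity.
           ++ rewrite Hcs by first [lia | lra]. ring.
      * apply sumR_le. intros t Ht. apply Rmult_le_compat_l; auto.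
        specialize (Hfeas t Ht). lra.
    + apply sumR_le. intros s Hs.
      assert (Dv g T s y <= 1) by (apply HD; lia).
      specialize (Hu'0 s Hs). nra.
Qed.
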